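(* Let $n\ge1$, $1\le k\le n$ and $p\in[0,1]$. Consider the unordered search problem on an array $\vec{x}=(x_1,\ldots,x_n)$ of $n$ distinct elements where the target $z$ is chosen uniformly at random among the entries of $\vec{x}$. Then any deterministic algorithm that runs in $k$ rounds and succeeds with probability at least $p$ (over the choice of $z$) asks at least $np\bigl(1-\frac{k-1}{2k}p\bigr)-1$ queries in expectation (over the choice of $z$). Moreover, there is a deterministic algorithm for this problem running in $k$ rounds, succeeding with probability at least $p$, that asks at most $np\bigl(1-\frac{k-1}{2k}p\bigr)+1$ queries in expectation.
   Context: Comparison model: the algorithm may only ask an oracle queries ''How is $a$ compared to $b$?'' with $a,b\in\{x_1,\ldots,x_n,z\}$, with answer ''$<$'', ''$=$'' or ''$>$''. The goal is to output the index $\ell$ with $z=x_\ell$. An algorithm runs in $k$ rounds if in each of $k$ rounds it submits a set of queries, chosen depending only on answers from earlier rounds, and then receives all their answers. The query count is the total number of queries asked. *)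

(* Defs.v *)
From HB Require Import structures.
From mathcomp Require Import all_boot all_order all_algebra.
From mathcomp Require Import reals.
Set Implicit Arguments. Unset Strict Implicit. Unset Printing Implicit Defensive.
Import Order.TTheory GRing.Theory Num.Theory.

(* Items that can be compared: [Some i] is x_i, [None] is the target z. *)
Definition query (n : nat) := (option 'I_n * option 'I_n)%type.

Inductive cmp := CLt | CEq | CGt.

Definition compare_nat (a b : nat) : cmp :=
  if (a < b)%N then CLt else if a == b then CEq else CGt.

(* The array x : 'I_n -> nat (values from a totally ordered set; distinctness
   is imposed as injectivity in the theorem) and the target z = x_l. *)
Definition value n (x : 'I_n -> nat) (l : 'I_n) (a : option 'I_n) : nat :=
  match a with None => x l | Some i => x i end.

Definition answer n (x : 'I_n -> nat) (l : 'I_n) (q : query n) : cmp :=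
  compare_nat (value x l q.1) (value x l q.2).

Definition transcript n := seq (query n * cmp).

(* A deterministic round-based algorithm: in round r (0-based) it submits the
   set of queries [alg_queries r T], a function of the answers T obtained in
   earlier rounds; finally it outputs an index from all answers. *)
Record algorithm (n : nat) := Algorithm {
  alg_queries : nat -> transcript n -> {set query n};
  alg_output : transcript n -> 'I_n }.

Fixpoint run n (A : algorithm n) (x : 'I_n -> nat) (l : 'I_n) (r : nat)
  : transcript n :=
  match r with
  | 0 => [::]
  | r'.+1 =>
      let T := run A x l r' in
      T ++ [seq (q, answer x l q) | q <- enum (alg_queries A r' T)]
  end.

Definition num_queries n (A : algorithm n) k x l : nat := size (run A x l k).

Definition correct n (A : algorithm n) k x l : bool :=
  alg_output A (run A x l k) == l.

Local Open Scope ring_scope.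

Definition succ_prob (R : realType) n (A : algorithm n) k (x : 'I_n -> nat) : R :=
  #|[set l : 'I_n | correct A k x l]|%:R / n%:R.

Definition exp_queries (R : realType) n (A : algorithm n) k (x : 'I_n -> nat) : R :=
  (\sum_(l : 'I_n) (num_queries A k x l)%:R) / n%:R.

(* Main.v *)
Require Import Defs.
From HB Require Import structures.
From mathcomp Require Import all_boot all_order all_algebra.
From mathcomp Require Import reals.
From mathcomp Require Import zify ring lra.
Import Order.TTheory GRing.Theory Num.Theory.
Set Implicit Arguments. Unset Strict Implicit. Unset Printing Implicit Defensive.
Lemma cmp_lt a b : a < b -> Defs.compare_nat a b = CLt.
Proof. by rewrite /Defs.compare_nat => ->. Qed.
Lemma cmp_gt a b : b < a -> Defs.compare_nat a b = CGt.
Proof. by rewrite /Defs.compare_nat => h; rewrite ltnNge ltnW //= gtn_eqF. Qed.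
Lemma cmp_eq a b : a = b -> Defs.compare_nat a b = CEq.
Proof. by rewrite /Defs.compare_nat => ->; rewrite ltnn eqxx. Qed.
Lemma cmp_eqP a b : Defs.compare_nat a b = CEq -> a = b.
Proof. by rewrite /Defs.compare_nat; case: ltnP => // _; case: eqP. Qed.

Lemma size_run n (A : algorithm n) x l r :
  size (run A x l r) = \sum_(s < r) #|alg_queries A s (run A x l s)|.
Proof.
elim: r => [|r IH]; first by rewrite big_ord0.
by rewrite big_ord_recr /= size_cat size_map -cardE IH.
Qed.


Lemma cauchy (f : nat -> nat) t : (\sum_(s < t) f s) ^ 2 <= t * \sum_(s < t) f s ^ 2.
Proof.
elim: t => [|t IH]; first by rewrite !big_ord0.
rewrite !big_ord_recr /=.
set S := \sum_(i < t) f i in IH *; set Q := \sum_(i < t) f i ^ 2 in IH *.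
set d := f t.
have h : 2 * (t * d) * S <= S ^ 2 + (t * d) ^ 2.
  case: (leqP (t * d) S) => hh.
  - have := sqrnB hh; nia.
  - have := sqrnB (ltnW hh); nia.
clearbody S Q d; case: (posnP t) => [t0|tpos].
  subst t; rewrite mul0n leqn0 expn_eq0 in IH; case/andP: IH => /eqP -> _; nia.
have h2 : t * (2 * d * S) <= t * (Q + t * d ^ 2) by nia.
rewrite leq_mul2l in h2; case/orP: h2 => [/eqP t0|h2]; first by move: tpos; rewrite t0.
nia.
Qed.

Lemma tele_sq (E : nat -> nat) t : (forall s, E s <= E s.+1) ->
  2 * \sum_(s < t) (E s.+1 - E s) * E s + \sum_(s < t) (E s.+1 - E s) ^ 2 = E t ^ 2 - E 0 ^ 2.
Proof.
move=> mon; elim: t => [|t IH]; first by rewrite !big_ord0 subnn.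
rewrite !big_ord_recr /=.
have h1 := mon t.
have h0 : E 0 <= E t.
  elim: (t) => // u IHu; exact: leq_trans IHu (mon u).
move: IH h1 h0; set X := \sum_(i < t) _; set Z := \sum_(i < t) _.
move: (E t.+1) (E t) (E 0) => b a c IH h1 h0.
rewrite -(subnKC h1) in IH *; move: (b - a) => d.
have h2 : c ^ 2 <= a ^ 2 by rewrite leq_exp2r.
have h3 : c ^ 2 <= (a + d) ^ 2 by apply: leq_trans h2 _; rewrite leq_exp2r // leq_addr.
rewrite addKn sqrnD; clearbody X Z.
move: IH h2 h3; rewrite sqrnD.
rewrite (mulnC a d); lia.
Qed.


Lemma tele (E : nat -> nat) t : (forall s, E s <= E s.+1) ->
  \sum_(s < t) (E s.+1 - E s) = E t - E 0.
Proof.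
move=> mon; elim: t => [|t IH]; first by rewrite !big_ord0 subnn.
rewrite !big_ord_recr /= IH.
have h1 := mon t.
have h0 : E 0 <= E t.
  elim: (t) => // u IHu; exact: leq_trans IHu (mon u).
by rewrite addnBAC // subnKC.
Qed.


Lemma arith (E : nat -> nat) k n : E 0 = 0 -> (forall s, E s <= E s.+1) -> E k <= n ->
  2 * k * n * E k + E k ^ 2 <= 2 * k * (\sum_(s < k) (E s.+1 - E s) * (n - E s)) + k * E k ^ 2.
Proof.
move=> E0 mon Ek.
have Es : forall s, s <= k -> E s <= E k.
  move=> s sk; rewrite -(subnKC sk); elim: (k - s) => [|u IH]; first by rewrite addn0.
  by rewrite addnS; apply: leq_trans IH (mon _).
have h1 : \sum_(s < k) (E s.+1 - E s) * (n - E s) + \sum_(s < k) (E s.+1 - E s) * E s = n * E k.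
  rewrite -big_split /=.
  rewrite (eq_bigr (fun s : 'I_k => n * (E s.+1 - E s))); last first.
    move=> s _; rewrite -mulnDr subnK; first by rewrite mulnC.
    by apply: leq_trans (Es _ _) Ek; apply: ltnW.
  by rewrite -big_distrr /= tele // E0 subn0.
have h2 := @tele_sq E k mon; rewrite E0 exp0n // subn0 in h2.
have h3 := cauchy (fun s => E s.+1 - E s) k; rewrite tele // E0 subn0 in h3.
move: h1 h2 h3; set S1 := \sum_(s < k) _; set X := \sum_(s < k) _; set Z := \sum_(s < k) _.
clearbody S1 X Z; move: (E k) => m h1 h2 h3.
have e1 := congr1 (muln (2 * k)) h1; have e2 := congr1 (muln k) h2.
rewrite !mulnDr in e1 e2.
rewrite mulnA in e1; clear -e1 e2 h3; lia.
Qed.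

Section Lower.
Variables (n : nat) (A : algorithm n).

Definition rank (B : seq 'I_n) (i : 'I_n) : nat :=
  if i \in B then index i B else size B + i.
Definition valB (B : seq 'I_n) (a : option 'I_n) : nat :=
  match a with None => size B + n | Some i => rank B i end.
Definition ansB B (q : query n) := Defs.compare_nat (valB B q.1) (valB B q.2).

Definition step1 (B : seq 'I_n) (q : query n) : seq 'I_n :=
  match q with
  | (Some i, None) | (None, Some i) => if i \in B then B else rcons B i
  | (Some i, Some j) => if (i \in B) || (j \in B) || (i == j) then B else rcons B i
  | _ => B end.

Definition decided (B : seq 'I_n) (q : query n) : bool :=
  match q with
  | (Some i, None) | (None, Some i) => i \in B
  | (Some i, Some j) => (i \in B) || (j \in B) || (i == j)
  | _ => true end.

Fixpoint sim r : transcript n * seq 'I_n :=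
  match r with
  | 0 => ([::], [::])
  | r'.+1 => let TB := sim r' in
      let qs := enum (alg_queries A r' TB.1) in
      let B' := foldl step1 TB.2 qs in
      (TB.1 ++ [seq (q, ansB B' q) | q <- qs], B')
  end.

Lemma step1_ext B q : exists t, step1 B q = B ++ t.
Proof.
case: q => [[i|] [j|]] /=; try by exists [::]; rewrite cats0.
- by case: ifP => _; [exists [::]; rewrite cats0 | exists [:: i]; rewrite cats1].
- by case: ifP => _; [exists [::]; rewrite cats0 | exists [:: i]; rewrite cats1].
- by case: ifP => _; [exists [::]; rewrite cats0 | exists [:: j]; rewrite cats1].
Qed.

Lemma foldl_ext B qs : exists t, foldl step1 B qs = B ++ t.
Proof.
elim: qs B => [|q qs IH] B /=; first by exists [::]; rewrite cats0.
have [t1 ->] := step1_ext B q; have [t2 ->] := IH (B ++ t1).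
by exists (t1 ++ t2); rewrite catA.
Qed.

Lemma step1_uniq B q : uniq B -> uniq (step1 B q).
Proof.
case: q => [[i|] [j|]] //= U; case: ifP => // H; rewrite rcons_uniq U andbT.
- by move: H; case: (i \in B).
- by rewrite H.
- by rewrite H.
Qed.

Lemma foldl_uniq B qs : uniq B -> uniq (foldl step1 B qs).
Proof. by elim: qs B => [|q qs IH] B //= U; apply/IH/step1_uniq. Qed.

Lemma step1_size B q : size (step1 B q) <= (size B).+1.
Proof.
case: q => [[i|] [j|]] //=; try case: ifP => _; rewrite ?size_rcons //.
Qed.

Lemma foldl_size B qs : size (foldl step1 B qs) <= size B + size qs.
Proof.
elim: qs B => [|q qs IH] B /=; first by rewrite addn0.
by apply: leq_trans (IH _) _; rewrite addnS -addSn leq_add2r step1_size.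
Qed.

Lemma decided_ext B t q : decided B q -> decided (B ++ t) q.
Proof.
case: q => [[i|] [j|]] //=; rewrite ?mem_cat.
- by case/orP => [/orP [->|->]|->]; rewrite ?orbT.
- by move->.
- by move->.
Qed.

Lemma step1_decided B q : decided (step1 B q) q.
Proof.
case: q => [[i|] [j|]] //=.
- case: ifP => // /negbT; rewrite !negb_or => /andP [/andP [Hi _] _].
  by rewrite mem_rcons in_cons eqxx.
- by case: ifP => // _; rewrite mem_rcons in_cons eqxx.
- by case: ifP => // _; rewrite mem_rcons in_cons eqxx.
Qed.

Lemma foldl_decided B qs q : q \in qs -> decided (foldl step1 B qs) q.
Proof.
elim: qs B => [|q' qs IH] B //=; rewrite in_cons => /orP [/eqP <-|Hq]; last exact: IH.
have [t ->] := foldl_ext (step1 B q) qs.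
exact/decided_ext/step1_decided.
Qed.

Lemma rank_in B t i : i \in B -> rank (B ++ t) i = rank B i /\ rank B i < size B.
Proof.
move=> iB; rewrite /rank mem_cat iB /= index_cat iB; split=> //.
by rewrite index_mem.
Qed.

Lemma rank_out B t i : i \notin B -> size B <= rank (B ++ t) i /\ size B <= rank B i.
Proof.
move=> /negbTE iB; rewrite /rank mem_cat iB /= index_cat iB leq_addr; split=> //.
by case: ifP => _; rewrite ?leq_addr // size_cat -addnA leq_addr.
Qed.

Lemma agree B t l q : decided B q -> l \notin B ->
  ansB B q = answer (rank (B ++ t)) l q.
Proof.
move=> D lB; have [Hl _] := rank_out t lB.
rewrite /ansB /answer; case: q D => [[i|] [j|]] /=.
- case: (eqVneq i j) => [-> _|ne]; first by rewrite !cmp_eq.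
  rewrite orbF; case iB: (i \in B); case jB: (j \in B) => //= _.
  + have [e1 h1] := rank_in t iB; have [e2 h2] := rank_in t jB.
    rewrite e1 e2 /Defs.compare_nat; done.
  + have [e1 h1] := rank_in t iB; have [h2 h3] := rank_out t (negbT jB).
    by rewrite !cmp_lt // ?e1; apply: leq_trans h1 _.
  + have [e1 h1] := rank_in t jB; have [h2 h3] := rank_out t (negbT iB).
    by rewrite !cmp_gt // ?e1; apply: leq_trans h1 _.
- move=> iB; have [e1 h1] := rank_in t iB.
  rewrite !cmp_lt // ?e1; first by apply: leq_trans h1 _.
  by apply: leq_trans h1 (leq_addr _ _).
- move=> iB; have [e1 h1] := rank_in t iB.
  rewrite !cmp_gt // ?e1; first by apply: leq_trans h1 _.
  by apply: leq_trans h1 (leq_addr _ _).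
- by move=> _; rewrite !cmp_eq.
Qed.

Lemma sim_ext r s : r <= s -> exists t, (sim s).2 = (sim r).2 ++ t.
Proof.
elim: s => [|s IH]; first by rewrite leqn0 => /eqP ->; exists [::]; rewrite cats0.
rewrite leq_eqVlt => /orP [/eqP ->|]; first by exists [::]; rewrite cats0.
rewrite ltnS => /IH [t Ht] /=.
have [t2 ->] := foldl_ext (sim s).2 (enum (alg_queries A s (sim s).1)).
by exists (t ++ t2); rewrite Ht catA.
Qed.

Lemma run_sim k l r : r <= k -> l \notin (sim r).2 ->
  run A (rank (sim k).2) l r = (sim r).1.
Proof.
elim: r => [//|r IH] rk lB /=.
have [t Ht] := sim_ext rk.
have [t2 Ht2] := foldl_ext (sim r).2 (enum (alg_queries A r (sim r).1)).
have lB' : l \notin (sim r).2.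
  by move: lB => /=; rewrite Ht2 mem_cat negb_or => /andP [].
rewrite IH ?(ltnW rk) //; congr (_ ++ _).
apply/eq_in_map => q Hq.
rewrite Ht /= ; congr (_, _); symmetry; apply: agree => //.
by apply: foldl_decided; rewrite Hq.
Qed.

Lemma sim_uniq r : uniq (sim r).2.
Proof. by elim: r => //= r IH; apply: foldl_uniq. Qed.

Lemma sim_size r : size (sim r.+1).2 <= size (sim r).2 + #|alg_queries A r (sim r).1|.
Proof. by rewrite /= cardE; apply: foldl_size. Qed.


Lemma rank_inj (B : seq 'I_n) : injective (rank B).
Proof.
move=> i j; rewrite /rank; case iB: (i \in B); case jB: (j \in B).
- by move/index_inj; apply.
- by move=> h; have := index_mem i B; rewrite iB h ltnNge leq_addr.
- by move=> h; have := index_mem j B; rewrite jB -h ltnNge leq_addr.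
- by move/addnI/val_inj.
Qed.

Lemma sum_notin (B : seq 'I_n) Q : \sum_(l : 'I_n) (l \notin B) * Q = (n - #|B|) * Q.
Proof.
rewrite (eq_bigr (fun l => if l \notin B then Q else 0)); last first.
  by move=> l _; case: (l \notin B); rewrite ?mul1n ?mul0n.
rewrite -big_mkcond sum_nat_const /=.
have h := cardC [in B]; rewrite card_ord in h.
have h2 : #|[predC [in B]]| = n - #|[in B]| by move: h; move: (#|[predC [in B]]|) (#|[in B]|) => a b <-; rewrite addKn.
rewrite -h2; congr (_ * _); apply: eq_card => i; by rewrite !inE.
Qed.

Lemma lower_nat k :
  let B := (sim k).2 in let x := rank B in
  [/\ injective x, #|[set l | correct A k x l]| <= size B + 1, size B <= n &
   2 * k * n * size B + size B ^ 2 <=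
     2 * k * (\sum_(l : 'I_n) num_queries A k x l) + k * size B ^ 2].
Proof.
move=> B x.
have Bn : size B <= n.
  have := sim_uniq k; rewrite -/B => /card_uniqP <-.
  by apply: leq_trans (max_card _) _; rewrite card_ord.
split=> //.
- exact: rank_inj.
- set C := [set l | correct A k x l].
  have sub : C \subset [set l | l \in B] :|: [set alg_output A (sim k).1].
    apply/subsetP => l; rewrite !inE /correct => /eqP cl.
    case lB: (l \in B) => //=.
    by rewrite run_sim ?lB // in cl; rewrite cl.
  apply: leq_trans (subset_leq_card sub) _.
  apply: leq_trans (leq_card_setU _ _) _.
  rewrite cards1 cardsE leq_add2r.
  by have := sim_uniq k; rewrite -/B => /card_uniqP ->.
- set E := fun s => size (sim s).2.
  have mon : forall s, E s <= E s.+1.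
    by move=> s; rewrite /E; have [t ->] := sim_ext (leqnSn s); rewrite size_cat leq_addr.
  have := @arith E k n (erefl _) mon Bn; rewrite -/B => h.
  apply: leq_trans h _; rewrite leq_add2r leq_mul2l; apply/orP; right.
  pose Q s := #|alg_queries A s (sim s).1|.
  apply: (@leq_trans (\sum_(s < k) Q s * (n - E s))).
    apply: leq_sum => s _; rewrite leq_mul2r; apply/orP; right.
    rewrite leq_subLR; exact: sim_size.
  apply: (@leq_trans (\sum_(l : 'I_n) \sum_(s < k) (l \notin (sim s).2) * Q s)).
    rewrite exchange_big /=; apply: leq_sum => s _.
    rewrite sum_notin mulnC leq_mul2r; apply/orP; right.
    rewrite /E; by have := sim_uniq s => /card_uniqP ->.
  apply: leq_sum => l _; rewrite /num_queries size_run; apply: leq_sum => s _.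
  case lB: (l \in (sim s).2); first by rewrite mul0n.
  by rewrite mul1n run_sim ?lB // ltnW.
Qed.

End Lower.

Lemma sum_lt n m : \sum_(i < n) (i < m : nat) = minn m n.
Proof.
elim: n => [|n IH]; first by rewrite big_ord0 minn0.
rewrite big_ord_recr /= IH; case: ltnP => h; lia.
Qed.


Section Upper.
Variables (n : nat) (d0 : 'I_n) (m k : nat).

Definition isEq (c : cmp) := if c is CEq then true else false.
Definition grp s : {set query n} :=
  [set (Some i, None) | i in [set i : 'I_n | (i < m) && (i %% k == s)]].
Definition found (T : transcript n) := has (fun e => isEq e.2) T.
Definition outp (T : transcript n) : 'I_n :=
  foldr (fun e acc => if isEq e.2 then (if e.1.1 is Some i then i else acc) else acc) d0 T.
Definition Alg := Algorithm (fun s T => if found T then set0 else grp s) outp.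

Lemma inj_q : injective (fun i : 'I_n => ((Some i, None) : query n)).
Proof. by move=> i j [->]. Qed.

Lemma mem_grp s i : ((Some i, None) \in grp s) = (i < m) && (i %% k == s).
Proof. by rewrite /grp (mem_imset _ _ inj_q) inE. Qed.

Lemma card_grp s : #|grp s| = \sum_(i < n) ((i < m) && (i %% k == s)).
Proof.
rewrite /grp card_imset; last exact: inj_q.
by rewrite -sum1_card big_mkcond /=; apply: eq_bigr => i _; rewrite inE; case: ifP.
Qed.

Variables (x : 'I_n -> nat) (xinj : injective x) (l : 'I_n).

Definition okE (e : query n * cmp) := ~~ isEq e.2 || (e.1.1 == Some l).

Lemma run_eq r : all okE (run Alg x l r).
Proof.
elim: r => [//|r IH] /=; rewrite all_cat IH /= all_map; apply/allP => q.
rewrite mem_enum; case: ifP; first by rewrite inE.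
move=> _; case: q => [a b] /imsetP [i _ [-> ->]] /=; rewrite /okE /answer /=.
by case h: (Defs.compare_nat _ _) => //=; rewrite (xinj (cmp_eqP h)).
Qed.

Lemma found_run r : found (run Alg x l r) = (l < m) && (l %% k < r).
Proof.
elim: r => [|r IH] /=; first by rewrite andbF.
rewrite /found has_cat -/(found _) IH.
case: ifP => F.
  rewrite /=; case/andP: F => -> /= h; by rewrite ltnS ltnW.
rewrite /=.
have -> : has (fun e => isEq e.2) [seq (q, answer x l q) | q <- enum (grp r)] =
          (l < m) && (l %% k == r).
  rewrite -mem_grp has_map; apply/hasP/idP.
  - case=> q; rewrite mem_enum => Hq /=.
    case: q Hq => [a b] Hq; have := Hq; case/imsetP => i _ [ea eb]; subst a b.
    rewrite /answer /=.
    by case h: (Defs.compare_nat _ _) => // _; rewrite -(xinj (cmp_eqP h)).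
  - move=> H; exists (Some l, None); rewrite ?mem_enum //.
    by rewrite /= /answer /= cmp_eq.
move: F; case: (l < m) => //= F; by rewrite ltnS leq_eqVlt F orbF.
Qed.

Lemma outp_l T : found T -> all okE T -> outp T = l.
Proof.
elim: T => [//|e T IH] /= F /andP [He H].
case E: (isEq e.2).
  by move: He; rewrite /okE E /= => /eqP ->.
apply: IH => //; by move: F; rewrite /found /= E.
Qed.

Hypothesis kpos : 0 < k.

Lemma correct_l : l < m -> correct Alg k x l.
Proof.
move=> lm; rewrite /correct /= outp_l ?eqxx //; last exact: run_eq.
by rewrite found_run lm ltn_pmod.
Qed.

Lemma num_l : num_queries Alg k x l =
  \sum_(i < n) ((i < m) && ~~ ((l < m) && (l %% k < i %% k))).
Proof.
rewrite /num_queries size_run /=.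
rewrite (eq_bigr (fun s : 'I_k => \sum_(i < n) (~~ ((l < m) && (l %% k < s))) * ((i < m) && (i %% k == s)))); last first.
  move=> s _; rewrite found_run; case: ifP => _; first by rewrite cards0 big1.
  by rewrite card_grp; apply: eq_bigr => i _; rewrite /= mul1n.
rewrite exchange_big /=; apply: eq_bigr => i _.
rewrite (bigD1 (Ordinal (ltn_pmod i kpos))) //= eqxx andbT big1; last first.
  move=> s /eqP ne.
  have -> : (i %% k == s) = false.
    by apply/eqP => h; apply: ne; apply: val_inj; rewrite /= h.
  by rewrite andbF muln0.
rewrite addn0; by case: (i < m); case: (~~ _).
Qed.

End Upper.

Lemma sum_card n (P : pred 'I_n) : \sum_(i < n) (P i : nat) = #|[set i | P i]|.
Proof.
rewrite -sum1_card [RHS]big_mkcond /=; apply: eq_bigr => i _; rewrite inE; by case: (P i).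
Qed.

Lemma count_class n m k r : 0 < k ->
  \sum_(i < n) ((i < m) && (i %% k == r)) <= (m.-1 %/ k).+1.
Proof.
move=> kpos; rewrite sum_card.
set S := [set i | _].
pose f (i : 'I_n) : 'I_n := Ordinal (leq_ltn_trans (leq_div i k) (ltn_ord i)).
have finj : {in S &, injective f}.
  move=> i j; rewrite !inE => /andP [_ /eqP ri] /andP [_ /eqP rj] [h].
  by apply: val_inj; rewrite /= (divn_eq i k) (divn_eq j k) h ri rj.
rewrite -(card_in_imset finj).
apply: (@leq_trans #|[set j : 'I_n | j < (m.-1 %/ k).+1]|).
  apply: subset_leq_card; apply/subsetP => j /imsetP [i]; rewrite /S inE => /andP [im _] ->.
  by rewrite inE /= ltnS leq_div2r // -ltnS; case: (m) im => //.
rewrite -sum_card sum_lt; exact: geq_minl.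
Qed.

Lemma upper_count n m k : 0 < k -> m <= n ->
  2 * k * (\sum_(l < n) \sum_(i < n) ((i < m) && ~~ ((l < m) && (l %% k < i %% k))))
    + k * m ^ 2 + m <= 2 * k * n * m + m ^ 2 + k * m.
Proof.
move=> kpos mn.
set N := \sum_(l < n) _.
pose c (l i : 'I_n) := ((l < m) && (i < m) && (l %% k < i %% k) : nat).
pose e (l i : 'I_n) := ((l < m) && (i < m) && (l %% k == i %% k) : nat).
set C := \sum_(l < n) \sum_(i < n) c l i.
set Eq := \sum_(l < n) \sum_(i < n) e l i.
have h1 : N + C = n * m.
  rewrite /N /C -big_split /=.
  rewrite (eq_bigr (fun l => \sum_(i < n) (i < m : nat))); last first.
    move=> l _; rewrite -big_split /=; apply: eq_bigr => i _; rewrite /c.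
    by case: (i < m); case: (l < m); case: (_ < _).
  under eq_bigr do rewrite sum_lt (minn_idPl mn).
  by rewrite big_const_ord iter_addn_0 mulnC.
have h2 : C + C + Eq = m * m.
  have hC : C = \sum_(l < n) \sum_(i < n) c i l by rewrite /C exchange_big.
  rewrite {2}hC /Eq -!big_split /=.
  rewrite (eq_bigr (fun l : 'I_n => (l < m) * \sum_(i < n) (i < m : nat))); last first.
    move=> l _; rewrite -!big_split big_distrr /=; apply: eq_bigr => i _; rewrite /c /e.
    case: (l < m); case: (i < m) => //=.
    by case: ltngtP.
  by rewrite -big_distrl /= sum_lt (minn_idPl mn).
have h3 : k * Eq + m <= m * m + k * m.
  case: (posnP m) => [m0|mpos].
    have mm0 : m * m = 0 by rewrite m0.
    have E0 : Eq = 0 by lia.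
    rewrite E0 muln0 add0n; lia.
  have mm : m.-1.+1 = m by rewrite prednK.
  have : Eq <= m * (m.-1 %/ k).+1.
    rewrite /Eq; apply: (@leq_trans (\sum_(l < n) (l < m) * (m.-1 %/ k).+1)).
      apply: leq_sum => l _; rewrite /e.
      case: (l < m) => /=; last by rewrite big1.
      rewrite mul1n (eq_bigr (fun i : 'I_n => ((i < m) && (i %% k == l %% k) : nat))).
        exact: count_class.
      by move=> i _; rewrite eq_sym.
    by rewrite -big_distrl /= sum_lt (minn_idPl mn).
  have hb : k * (m.-1 %/ k).+1 <= m.-1 + k.
    by rewrite mulnS addnC leq_add2r mulnC leq_trunc_div.
  move=> h.
  have s1 : k * Eq <= m * (m.-1 + k).
    apply: leq_trans (leq_mul (leqnn k) h) _.
    by rewrite mulnCA leq_mul2l hb orbT.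
  clear h hb; clearbody N C Eq; clear c e.
  case: m mpos s1 {mn h1 h2 mm} => // p _ /= s1.
  rewrite mulnDr in s1; rewrite mulSn; lia.
clear -h1 h2 h3.
have e1 := congr1 (muln (2 * k)) h1; have e2 := congr1 (muln k) h2.
rewrite !mulnDr in e1 e2.
lia.
Qed.

Local Open Scope ring_scope.

Lemma real_lower (R : realType) (n K N m u : R) : 1 <= K -> 0 <= u -> u <= n -> 0 <= m -> m <= n ->
  u <= m + 1 -> 2 * K * n * m + m ^+ 2 <= 2 * K * N + K * m ^+ 2 ->
  2 * K * n * u - (K - 1) * u ^+ 2 - 2 * K * n <= 2 * K * N.
Proof.
move=> K1 u0 un m0 mn um H.
have F : 0 <= 2 * K * n - (K - 1) * (u + m) by nra.
have id : 2 * K * n * u - (K - 1) * u ^+ 2 - (2 * K * n * m - (K - 1) * m ^+ 2)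
  = (u - m) * (2 * K * n - (K - 1) * (u + m)) by ring.
have : (u - m) * (2 * K * n - (K - 1) * (u + m)) <= 2 * K * n.
  case: (lerP u m) => h.
    have : (u - m) * (2 * K * n - (K - 1) * (u + m)) <= 0.
      by apply: mulr_le0_ge0 => //; lra.
    move=> h2; apply: le_trans h2 _; nra.
  have h1 : (u - m) * (2 * K * n - (K - 1) * (u + m)) <= 1 * (2 * K * n - (K - 1) * (u + m)).
    by apply: ler_wpM2r => //; lra.
  apply: le_trans h1 _; nra.
nra.
Qed.

Lemma real_upper (R : realType) (n K N m u : R) : 1 <= K -> 0 <= u -> u <= n -> m <= n ->
  u <= m -> m < u + 1 -> 2 * K * N + K * m ^+ 2 + m <= 2 * K * n * m + m ^+ 2 + K * m ->
  2 * K * N <= 2 * K * n * u - (K - 1) * u ^+ 2 + 2 * K * n.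
Proof.
move=> K1 u0 un mn um mu H.
have F : 0 <= 2 * K * n - (K - 1) * (u + m) by nra.
have id : 2 * K * n * m - (K - 1) * m ^+ 2 - (2 * K * n * u - (K - 1) * u ^+ 2)
  = (m - u) * (2 * K * n - (K - 1) * (u + m)) by ring.
have h1 : (m - u) * (2 * K * n - (K - 1) * (u + m)) <= 1 * (2 * K * n - (K - 1) * (u + m)).
  by apply: ler_wpM2r => //; lra.
nra.
Qed.

Theorem theorem2 (R : realType) (n k : nat) (p : R) :
  (1 <= n)%N -> (1 <= k <= n)%N -> 0 <= p <= 1 ->
  (forall A : algorithm n,
      (forall x : 'I_n -> nat, injective x -> p <= succ_prob R A k x) ->
      exists x : 'I_n -> nat, injective x /\
        n%:R * p * (1 - (k%:R - 1) / (2 * k%:R) * p) - 1 <= exp_queries R A k x)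
  /\
  (exists A : algorithm n,
      forall x : 'I_n -> nat, injective x ->
        p <= succ_prob R A k x /\
        exp_queries R A k x <= n%:R * p * (1 - (k%:R - 1) / (2 * k%:R) * p) + 1).
Proof.
move=> hn /andP [hk kn] /andP [p0 p1].
have n0 : (0 : R) < n%:R by rewrite ltr0n.
have K1 : (1 : R) <= k%:R by rewrite ler1n.
have K0 : (0 : R) < 2 * k%:R by nra.
have K0' : (k%:R : R) != 0 by rewrite pnatr_eq0 -lt0n.
have u0 : 0 <= n%:R * p by nra.
have un : n%:R * p <= n%:R by nra.
have keyeq : forall N : R, (2 * k%:R) * ((n%:R * p * (1 - (k%:R - 1) / (2 * k%:R) * p) + N) * n%:R)
   = 2 * k%:R * n%:R * (n%:R * p) - (k%:R - 1) * (n%:R * p) ^+ 2 + 2 * k%:R * n%:R * N.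
  by move=> N; field.
split.
- move=> A HA.
  have [inj hc Bn harith] := lower_nat A k.
  set B := (sim A k).2 in inj hc Bn harith.
  exists (rank B); split => //.
  have := HA _ inj; rewrite /succ_prob ler_pdivlMr // => hp.
  rewrite /exp_queries ler_pdivlMr // -natr_sum.
  rewrite -(ler_pM2l K0) (keyeq (-1)).
  move: harith; rewrite -(ler_nat R) !natrD !natrM ?natrX -?expr2 => h.
  have hm : n%:R * p <= (size B)%:R + 1.
    apply: le_trans (_ : #|[set l | correct A k (rank B) l]|%:R <= _); first by rewrite mulrC.
    by rewrite natr1 ler_nat -addn1.
  have Bn' : ((size B)%:R : R) <= n%:R by rewrite ler_nat.
  have := @real_lower R n%:R k%:R _ (size B)%:R (n%:R * p) K1 u0 un (ler0n _ _) Bn' hm h.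
  by rewrite mulrN1 mulrA.
- have d0 : 'I_n := Ordinal hn.
  have exP : exists m, (p * n%:R <= m%:R) by exists n; nra.
  case: (ex_minnP exP) => m Pm minm.
  have mn : (m <= n)%N by apply: minm; nra.
  have mu : (m%:R : R) < n%:R * p + 1.
    case: m Pm minm {mn} => [|m] Pm minm; first by rewrite ltr_pwDr.
    have : ~~ (p * n%:R <= m%:R).
      by apply/negP => /minm; rewrite ltnn.
    rewrite -ltNge => h; rewrite -natr1; nra.
  exists (Alg d0 m k) => x xinj; split.
  + rewrite /succ_prob ler_pdivlMr //; apply: le_trans Pm _; rewrite ler_nat.
    apply: (@leq_trans #|[set l : 'I_n | (l < m)%N]|).
      by rewrite -sum_card sum_lt (minn_idPl mn).
    apply: subset_leq_card; apply/subsetP => l; rewrite !inE => lm.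
    exact: correct_l.
  + rewrite /exp_queries ler_pdivrMr // -natr_sum.
    rewrite -(ler_pM2l K0) (keyeq 1) mulr1.
    have := upper_count hk mn; rewrite -(ler_nat R) !natrD !natrM ?natrX -?expr2 => h.
    rewrite (eq_bigr _ (fun l _ => @num_l n d0 m k x xinj l hk)).
    have mn' : (m%:R : R) <= n%:R by rewrite ler_nat.
    have Pm' : n%:R * p <= m%:R by rewrite mulrC.
    have := @real_upper R n%:R k%:R _ m%:R (n%:R * p) K1 u0 un mn' Pm' mu h.
    by rewrite mulrA.
Qed.
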